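(* Let $\mathcal C$ be a subspace of $\mathcal H=\mathcal H_A\otimes\mathcal H_B$ with encoding isometry $\mathcal E:\mathcal L\to\mathcal C$ from a logical space $\mathcal L$ onto $\mathcal C$. Consider the following experiment: (1) a party chooses an arbitrary joint state of the logical system $\mathcal L$ and an auxiliary system $\mathrm{Aux}$ (of arbitrary finite dimension); (2) $\mathcal L$ is encoded with $\mathcal E$; (3) the party applies an arbitrary operation acting only on $\mathrm{Aux}$ and on the components in $\mathcal H_B$ of the encoding; (4) $\mathrm{Aux}$ is traced out. The set of possible resulting states of $\mathcal H$ (the corrupted codeword) is exactly $ST_B(\mathcal C)$.
   Context: A mixed state $\rho'$ is ''in'' $\mathcal C$ if $\mathrm{Tr}(P_{\mathcal C}\rho')=1$, where $P_{\mathcal C}$ is the projector onto $\mathcal C$. $ST_B(\mathcal C)=\{\rho:\exists\rho'\text{ in }\mathcal C,\ \mathrm{Tr}_B(\rho)=\mathrm{Tr}_B(\rho')\}$. *)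

(* Defs.v *)
From mathcomp Require Import all_boot all_order all_algebra.
From mathcomp Require Import algC.
From mathcomp Require Import mxtens.
Set Implicit Arguments. Unset Strict Implicit. Unset Printing Implicit Defensive.
Import Order.TTheory GRing.Theory Num.Theory.
Local Open Scope ring_scope.

(* Finite-dimensional Hilbert spaces C^n, with scalars algC (algebraic complex
   numbers, a numClosedFieldType with conjugation conjC).  A composite system
   X (x) Y of dimensions m, n is C^(m*n) indexed via mxtens_index, and the
   Kronecker product is mxtens's  A *t B. *)

Definition dagger {m n : nat} (M : 'M[algC]_(m, n)) : 'M[algC]_(n, m) :=
  (map_mx Num.conj M)^T.

Definition psd {n : nat} (M : 'M[algC]_n) : Prop :=
  forall v : 'cV[algC]_n, 0 <= (dagger v *m M *m v) 0 0.

Definition density {n : nat} (rho : 'M[algC]_n) : Prop :=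
  psd rho /\ \tr rho = 1.

Definition is_isometry {n k : nat} (V : 'M[algC]_(n, k)) : Prop :=
  dagger V *m V = 1%:M.

Definition ptrace2 {m n : nat} (X : 'M[algC]_(m * n)) : 'M[algC]_m :=
  \matrix_(i, j) \sum_(l < n) X (mxtens_index (i, l)) (mxtens_index (j, l)).

(* The code C = range E (E : L -> H_A (x) H_B an is_isometry); its projector is
   P_C = E E^dagger.  A state rho' is "in C" iff Tr(P_C rho') = 1. *)
Definition code_proj {n k : nat} (E : 'M[algC]_(n, k)) : 'M[algC]_n :=
  E *m dagger E.

Definition in_code {n k : nat} (E : 'M[algC]_(n, k)) (rho : 'M[algC]_n) : Prop :=
  density rho /\ \tr (code_proj E *m rho) = 1.

Definition ST_B {a b k : nat} (E : 'M[algC]_(a * b, k)) (rho : 'M[algC]_(a * b)) : Prop :=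
  density rho /\
  exists rho' : 'M[algC]_(a * b), in_code E rho' /\ ptrace2 rho = ptrace2 rho'.

(* quantum operation (CPTP map) given by Kraus operators K_0..K_{r-1} : C^q -> C^p *)
Definition kraus {p q r : nat} (K : 'I_r -> 'M[algC]_(p, q)) : Prop :=
  \sum_(i < r) dagger (K i) *m K i = 1%:M.

(* I_A (x) K, where K acts on H_B (x) Aux (input dim b*d, output dim b*d'),
   regarded as an operator (H_A (x) H_B) (x) Aux -> (H_A (x) H_B) (x) Aux'. *)
Definition lift_B {a b d d' : nat} (K : 'M[algC]_(b * d', b * d)) :
  'M[algC]_(a * b * d', a * b * d) :=
  castmx (mulnA a b d', mulnA a b d) ((1%:M : 'M[algC]_a) *t K).

Definition apply_kraus {p q r : nat} (K : 'I_r -> 'M[algC]_(p, q)) (X : 'M[algC]_q) :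
  'M[algC]_p := \sum_(i < r) K i *m X *m dagger (K i).

(* Outcomes of the experiment:
   (1) a joint state sigma of L (x) Aux, Aux of arbitrary finite dimension d;
   (2) encode L with E, i.e. apply E (x) I_Aux;
   (3) apply an arbitrary quantum operation (CPTP, Kraus form) acting only on
       H_B (x) Aux (output H_B (x) Aux', Aux' of arbitrary dimension d');
   (4) trace out the auxiliary system. *)
Definition experiment_outcome {a b k : nat} (E : 'M[algC]_(a * b, k))
  (rho : 'M[algC]_(a * b)) : Prop :=
  exists (d : nat) (sigma : 'M[algC]_(k * d)),
    density sigma /\
    exists (d' r : nat) (K : 'I_r -> 'M[algC]_(b * d', b * d)),
      kraus K /\
      let encoded := (E *t (1%:M : 'M[algC]_d)) *m sigma *m dagger (E *t (1%:M : 'M[algC]_d)) in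
      rho = ptrace2 (apply_kraus (fun i => lift_B (a := a) (K i)) encoded).

(* Main.v *)
Require Import Defs.
From mathcomp Require Import all_boot all_order all_algebra.
From mathcomp Require Import algC.
From mathcomp Require Import mxtens.
From mathcomp Require Import sesquilinear spectral.
From mathcomp Require Import ring.
Set Implicit Arguments. Unset Strict Implicit. Unset Printing Implicit Defensive.
Import Order.TTheory GRing.Theory Num.Theory.
Local Open Scope ring_scope.

Lemma daggerE m n (A : 'M[algC]_(m, n)) i j : dagger A i j = (A j i)^*.
Proof. by rewrite !mxE. Qed.

Lemma dagger_mul m n p (A : 'M[algC]_(m, n)) (B : 'M[algC]_(n, p)) :
  dagger (A *m B) = dagger B *m dagger A.
Proof. by rewrite /dagger map_mxM trmx_mul. Qed.

Lemma daggerK m n (A : 'M[algC]_(m, n)) : dagger (dagger A) = A.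
Proof. by apply/matrixP => i j; rewrite !daggerE conjCK. Qed.

Lemma dagger1 n : dagger (1%:M : 'M[algC]_n) = 1%:M.
Proof. by rewrite /dagger map_mx1 trmx1. Qed.

Lemma dagger0 m n : dagger (0 : 'M[algC]_(m, n)) = 0.
Proof. by apply/matrixP => i j; rewrite !daggerE !mxE conjC0. Qed.

Lemma daggerD m n (A B : 'M[algC]_(m, n)) : dagger (A + B) = dagger A + dagger B.
Proof. by apply/matrixP => i j; rewrite !mxE rmorphD. Qed.

Lemma daggerN m n (A : 'M[algC]_(m, n)) : dagger (- A) = - dagger A.
Proof. by apply/matrixP => i j; rewrite !mxE rmorphN. Qed.

Lemma daggerB m n (A B : 'M[algC]_(m, n)) : dagger (A - B) = dagger A - dagger B.
Proof. by rewrite daggerD daggerN. Qed.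

Lemma daggerZ m n c (A : 'M[algC]_(m, n)) : dagger (c *: A) = c^* *: dagger A.
Proof. by apply/matrixP => i j; rewrite !mxE rmorphM. Qed.

Lemma dagger_sum m n I (r : seq I) (P : pred I) (F : I -> 'M[algC]_(m, n)) :
  dagger (\sum_(i <- r | P i) F i) = \sum_(i <- r | P i) dagger (F i).
Proof.
by apply: (big_morph dagger) => [A B|]; rewrite ?daggerD ?dagger0.
Qed.

Lemma dagger_tens m n p q (A : 'M[algC]_(m, n)) (B : 'M[algC]_(p, q)) :
  dagger (A *t B) = dagger A *t dagger B.
Proof. by rewrite /dagger map_mxT trmx_tens. Qed.

Lemma dagger_tr m n (A : 'M[algC]_(m, n)) : dagger A^T = map_mx Num.conj A.
Proof. by apply/matrixP => i j; rewrite !mxE. Qed.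

Lemma dagger_diag n (d : 'rV[algC]_n) :
  (forall i, d 0 i \is Num.real) -> dagger (diag_mx d) = diag_mx d.
Proof.
move=> dr; apply/matrixP => i j; rewrite !mxE.
have [->|ne] := eqVneq i j; rewrite ?eqxx ?(negbTE ne) ?mulr1n ?mulr0n ?conj_Creal // ?conjC0.
Qed.

Lemma quadE n (M : 'M[algC]_n) (u w : 'cV[algC]_n) :
  (dagger u *m M *m w) 0 0 = \sum_i \sum_j (u i 0)^* * M i j * w j 0.
Proof.
rewrite !mxE [RHS]exchange_big; apply: eq_bigr => j _; rewrite !mxE mulr_suml.
by apply: eq_bigr => i _; rewrite !mxE.
Qed.

Lemma norm_ge0 n (w : 'cV[algC]_n) : 0 <= (dagger w *m w) 0 0.
Proof.
rewrite !mxE; apply: sumr_ge0 => i _; rewrite !mxE mulrC; exact: mul_conjC_ge0.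
Qed.

Lemma psd_gram m n (A : 'M[algC]_(m, n)) : psd (A *m dagger A).
Proof.
move=> v; rewrite mulmxA -(daggerK A) -dagger_mul -mulmxA daggerK.
exact: norm_ge0.
Qed.

Lemma psd_conj m n (V : 'M[algC]_(m, n)) (M : 'M[algC]_n) :
  psd M -> psd (V *m M *m dagger V).
Proof.
move=> pM v; have := pM (dagger V *m v).
by rewrite dagger_mul daggerK !mulmxA.
Qed.

Lemma psd0 n : psd (0 : 'M[algC]_n).
Proof. by move=> v; rewrite mulmx0 mul0mx mxE. Qed.

Lemma psdD n (A B : 'M[algC]_n) : psd A -> psd B -> psd (A + B).
Proof.
move=> pA pB v; rewrite mulmxDr mulmxDl mxE; exact: addr_ge0.
Qed.

Lemma psd_sum n I (r : seq I) (F : I -> 'M[algC]_n) :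
  (forall i, psd (F i)) -> psd (\sum_(i <- r) F i).
Proof.
move=> H; elim: r => [|x r IH]; first by rewrite big_nil; exact: psd0.
by rewrite big_cons; apply: psdD.
Qed.

Lemma gram_eq0 m n (A : 'M[algC]_(m, n)) : A *m dagger A = 0 -> A = 0.
Proof.
move=> H; apply/matrixP => i j; rewrite mxE.
have : (A *m dagger A) i i = 0 by rewrite H mxE.
rewrite mxE => /psumr_eq0P H2.
have := H2 _ j isT; rewrite daggerE => h.
apply/eqP; rewrite -mul_conjC_eq0; apply/eqP; apply: h => k _.
by rewrite daggerE; exact: mul_conjC_ge0.
Qed.

Lemma dagger_delta n (i : 'I_n) : dagger (delta_mx i 0 : 'cV[algC]_n) = delta_mx 0 i.
Proof.
apply/matrixP => k l; rewrite !mxE.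
by case: (l == i); case: (k == 0); rewrite /= ?conjC1 ?conjC0.
Qed.

Lemma bilinE n (M : 'M[algC]_n) i j :
  (dagger (delta_mx i 0 : 'cV_n) *m M *m (delta_mx j 0 : 'cV_n)) 0 0 = M i j.
Proof. by rewrite dagger_delta -rowE -colE !mxE. Qed.

Lemma bilinE2 n (M : 'M[algC]_n) i j :
  \sum_k (dagger (delta_mx i 0 : 'cV_n) *m M) 0 k * (delta_mx j 0 : 'cV_n) k 0 = M i j.
Proof. by rewrite -bilinE mxE. Qed.

Lemma quad_comb n (M : 'M[algC]_n) i j c :
  (dagger (delta_mx i 0 + c *: delta_mx j 0 : 'cV_n) *m M *m (delta_mx i 0 + c *: delta_mx j 0 : 'cV_n)) 0 0
  = M i i + c * M i j + c^* * M j i + c^* * c * M j j.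
Proof.
rewrite daggerD daggerZ !mulmxDl !mulmxDr -!scalemxAl -!scalemxAr.
rewrite !mxE !bilinE2.
ring.
Qed.

Lemma cM (x y : algC) : (x * y)^* = x^* * y^*. Proof. exact: rmorphM. Qed.
Lemma cD (x y : algC) : (x + y)^* = x^* + y^*. Proof. exact: rmorphD. Qed.
Lemma cB (x y : algC) : (x - y)^* = x^* - y^*. Proof. exact: rmorphB. Qed.

Lemma psd_herm n (M : 'M[algC]_n) : psd M -> dagger M = M.
Proof.
move=> pM.
have rd : forall i, M i i \is Num.real.
  by move=> i; have := pM (delta_mx i 0); rewrite bilinE => /ger0_real.
apply/matrixP => i j; rewrite daggerE.
have r c : M j j + c * M j i + c^* * M i j + c^* * c * M i i \is Num.real.
  by rewrite -quad_comb; apply: ger0_real; apply: pM.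
have r' c c' : c^* = c' -> M j j + c * M j i + c' * M i j + c' * c * M i i \is Num.real.
  by move=> <-; apply: r.
have ci : 'i^* = - 'i :> algC by exact: conjCi.
have r1 := r 1; have ri := r' 'i _ ci.
rewrite conjC1 !mul1r in r1.

have hp : M j i + M i j \is Num.real.
  have -> : M j i + M i j = (M j j + M j i + M i j + M i i) - M j j - M i i by ring.
  by rewrite !rpredB.
have ht : 'i * M j i - 'i * M i j \is Num.real.
  have -> : 'i * M j i - 'i * M i j =
     (M j j + 'i * M j i + - 'i * M i j + - 'i * 'i * M i i) - M j j - M i i.
    have e : - 'i * 'i = 1 :> algC by rewrite mulNr -expr2 sqrCi opprK.
    by rewrite e; ring.
  by rewrite !rpredB.
move/CrealP: hp; move/CrealP: ht.
rewrite cB !cM cD ci => e1 e2.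
set x := M j i in e1 e2 *; set y := M i j in e1 e2 *.
have e3 : x^* - y^* = y - x.
  have := congr1 (fun z => 'i * z) e1.
  have e : 'i * 'i = -1 :> algC by rewrite -expr2 sqrCi.
  have e' : 'i * - 'i = 1 :> algC by rewrite mulrN e opprK.
  move=> h; transitivity ('i * (- 'i * x^* - - 'i * y^*)); first by rewrite mulrBr !mulrA e'; ring.
  by rewrite h mulrBr !mulrA e; ring.
have two : (2 : algC) != 0 by rewrite pnatr_eq0.
apply: (mulfI two).
transitivity ((x^* + y^*) + (x^* - y^*)); first by ring.
by rewrite e2 e3; ring.
Qed.

Lemma dagger_tstar m n (M : 'M[algC]_(m, n)) : dagger M = (M ^t* )%sesqui.
Proof. by rewrite /dagger map_trmx. Qed.

Lemma psd_spec n (M : 'M[algC]_n) : psd M -> exists (U : 'M[algC]_n) (d : 'rV[algC]_n),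
  [/\ dagger U *m U = 1%:M, U *m dagger U = 1%:M, forall i, 0 <= d 0 i
    & M = U *m diag_mx d *m dagger U].
Proof.
move=> pM; have h := psd_herm pM.
have nM : M \is normalmx by apply/normalmxP; rewrite -dagger_tstar h.
have Pu := spectral_unitarymx M.
move: (spectral_diag M) (orthomx_spectralP nM) => sp E.
move: (spectralmx M) Pu E => P Pu E.
have PP : P *m dagger P = 1%:M by rewrite dagger_tstar; apply/unitarymxP.
have PP' : dagger P *m P = 1%:M by apply: mulmx1C.
rewrite invmx_unitary // -dagger_tstar in E.
exists (dagger P), sp; split; rewrite ?daggerK //.
move=> i.
have D : P *m M *m dagger P = diag_mx sp.
  by rewrite E !mulmxA PP mul1mx -mulmxA PP mulmx1.
have := psd_conj P pM (delta_mx i 0); rewrite D bilinE mxE eqxx mulr1n.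
done.
Qed.

Lemma psd_factor n (M : 'M[algC]_n) : psd M -> exists F : 'M[algC]_n, M = F *m dagger F.
Proof.
move=> /psd_spec [U [d [_ _ d0 ->]]].
pose s : 'rV[algC]_n := \row_i sqrtC (d 0 i).
have sr : forall i, s 0 i \is Num.real by move=> i; rewrite mxE; apply: ger0_real; rewrite sqrtC_ge0.
exists (U *m diag_mx s); rewrite dagger_mul dagger_diag // !mulmxA -(mulmxA U (diag_mx s)) mulmx_diag.
congr (_ *m _ *m _); congr diag_mx; apply/rowP => i; rewrite !mxE -expr2 sqrtCK //.
Qed.

Lemma gram_kill m n p (T : 'M[algC]_m) (H : 'M[algC]_(m, n)) (H' : 'M[algC]_(m, p)) :
  T *m (H *m dagger H) = 0 -> H' *m dagger H' = H *m dagger H -> T *m H' = 0.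
Proof.
move=> h e; apply: gram_eq0; rewrite dagger_mul mulmxA -[T *m H' *m _]mulmxA e.
by rewrite h mul0mx.
Qed.

Lemma uhlmann a M (Ft Gt : 'M[algC]_(a, M)) : Ft *m dagger Ft = Gt *m dagger Gt ->
  exists Y0 Y1 : 'M[algC]_M,
    [/\ Gt *m Y0 = Ft, Gt *m Y1 = 0 & Y0 *m dagger Y0 + Y1 *m dagger Y1 = 1%:M].
Proof.
move=> eFG.
have [U [d [UU UU' d0 EX]]] := psd_spec (psd_gram Gt).
set X := Gt *m dagger Gt in eFG EX.
pose D := diag_mx d.
pose W := diag_mx (\row_i (d 0 i)^-1).
have DWD : D *m W *m D = D.
  rewrite /D /W !mulmx_diag; congr diag_mx; apply/rowP => i; rewrite !mxE.
  have [->|nz] := eqVneq (d 0 i) 0; first by rewrite !mul0r.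
  by rewrite mulfV // mul1r.
have WDW : W *m D *m W = W.
  rewrite /D /W !mulmx_diag; congr diag_mx; apply/rowP => i; rewrite !mxE.
  have [->|nz] := eqVneq (d 0 i) 0; first by rewrite invr0 !mul0r.
  by rewrite mulVf // mul1r.
have Wh : dagger W = W.
  by apply: dagger_diag => i; rewrite mxE rpredV; apply: ger0_real.
have UXU : dagger U *m X *m U = D.
  by rewrite EX !mulmxA UU mul1mx -mulmxA UU mulmx1.
pose T := U *m D *m W *m dagger U.
have TX : (1%:M - T) *m X = 0.
  rewrite mulmxBl mul1mx /T EX.
  have -> : U *m D *m W *m dagger U *m (U *m diag_mx d *m dagger U)
          = U *m (D *m W *m D) *m dagger U.
    by rewrite /D !mulmxA -[U *m _ *m _ *m dagger U *m U]mulmxA UU mulmx1.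
  by rewrite DWD subrr.
have TF : (1%:M - T) *m Ft = 0 by apply: (gram_kill TX).
have TG : (1%:M - T) *m Gt = 0 by apply: (gram_kill TX).
move: TF TG; rewrite !mulmxBl !mul1mx => /eqP; rewrite subr_eq0 => /eqP TF.
move=> /eqP; rewrite subr_eq0 => /eqP TG.
have XU : X *m U = U *m D by rewrite EX -mulmxA UU mulmx1.
pose A0 := dagger Gt *m U *m W *m dagger U.
pose Q := A0 *m Gt.
have A0h : dagger A0 = U *m W *m dagger U *m Gt.
  by rewrite /A0 !dagger_mul !daggerK Wh !mulmxA.
have hQh : dagger Q = Q by rewrite /Q dagger_mul A0h /A0 !mulmxA.
have XA : X *m dagger A0 = T *m Gt.
  by rewrite A0h !mulmxA XU.
have hQQ : Q *m Q = Q.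
  rewrite {1}/Q -mulmxA.
  have -> : Gt *m Q = Gt by rewrite /Q /A0 !mulmxA -/X XU.
  done.
exists (A0 *m Ft), (1%:M - Q); split.
- by rewrite /A0 !mulmxA -/X XU.
- by rewrite mulmxBr mulmx1 /Q /A0 !mulmxA -/X XU -TG subrr.
- rewrite dagger_mul -mulmxA (mulmxA Ft) eFG -/X.
  have -> : A0 *m (X *m dagger A0) = Q *m dagger Q by rewrite /Q dagger_mul !mulmxA.
  rewrite hQh hQQ daggerB dagger1 hQh mulmxBl mul1mx mulmxBr mulmx1 hQQ subrr subr0.
  by rewrite addrC subrK.
Qed.

Lemma sum_tens (V : nmodType) m n (F : 'I_(m * n) -> V) :
  \sum_(k < m * n) F k = \sum_(i < m) \sum_(j < n) F (mxtens_index (i, j)).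
Proof.
rewrite pair_big /= (reindex (@mxtens_unindex m n)) /=; last first.
  by exists (@mxtens_index m n) => k _; rewrite (mxtens_indexK, mxtens_unindexK).
by apply: eq_bigr => k _; rewrite -[in LHS](mxtens_unindexK k).
Qed.


Lemma sum_deltal n (i : 'I_n) (F : 'I_n -> algC) :
  \sum_(j < n) (i == j)%:R * F j = F i.
Proof.
rewrite (bigD1 i) //= eqxx mul1r big1 ?addr0 // => j /negbTE.
by rewrite eq_sym => ->; rewrite mul0r.
Qed.

Lemma sum_deltar n (i : 'I_n) (F : 'I_n -> algC) :
  \sum_(j < n) (j == i)%:R * F j = F i.
Proof.
by rewrite -[RHS](sum_deltal i); apply: eq_bigr => j _; rewrite eq_sym.
Qed.

Lemma ptrace2E m n (X : 'M[algC]_(m * n)) i j :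
  ptrace2 X i j = \sum_(l < n) X (mxtens_index (i, l)) (mxtens_index (j, l)).
Proof. by rewrite mxE. Qed.

Lemma tr_ptrace m n (X : 'M[algC]_(m * n)) : \tr (ptrace2 X) = \tr X.
Proof.
rewrite /mxtrace sum_tens; apply: eq_bigr => i _; by rewrite ptrace2E.
Qed.

Lemma tr_mul_ptrace m n (A : 'M[algC]_m) (X : 'M[algC]_(m * n)) :
  \tr (A *m ptrace2 X) = \tr ((A *t (1%:M : 'M[algC]_n)) *m X).
Proof.
rewrite /mxtrace sum_tens; apply: eq_bigr => i _.
rewrite mxE; under eq_bigr do rewrite ptrace2E mulr_sumr.
rewrite exchange_big /=; apply: eq_bigr => l _.
rewrite mxE sum_tens; apply: eq_bigr => j _.
under [RHS]eq_bigr do rewrite tensmxE [_ l _]mxE.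
rewrite (bigD1 l) //= eqxx mulr1n mulr1 big1 ?addr0 // => l' /negbTE.
by rewrite eq_sym => ->; rewrite mulr0n mulr0 mul0r.
Qed.

Lemma sum_only (V : nmodType) n (l : 'I_n) (F : 'I_n -> V) :
  (forall j, j != l -> F j = 0) -> \sum_(j < n) F j = F l.
Proof. by move=> H; rewrite (bigD1 l) //= big1 ?addr0 // => j /H. Qed.

Lemma psd_ptrace m n (X : 'M[algC]_(m * n)) : psd X -> psd (ptrace2 X).
Proof.
move=> pX v.
pose u (l : 'I_n) : 'cV[algC]_(m * n) :=
  \col_k (v (mxtens_unindex k).1 0 * ((mxtens_unindex k).2 == l)%:R).
have uE l i j : u l (mxtens_index (i, j)) 0 = v i 0 * (j == l)%:R.
  by rewrite mxE mxtens_indexK.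
have ql l : (dagger (u l) *m X *m u l) 0 0 =
    \sum_i \sum_j (v i 0)^* * X (mxtens_index (i, l)) (mxtens_index (j, l)) * v j 0.
  rewrite quadE sum_tens; apply: eq_bigr => i _.
  rewrite (@sum_only _ _ l) => [|l1 nl1]; last first.
    by apply: big1 => k _; rewrite uE (negbTE nl1) mulr0 conjC0 !mul0r.
  rewrite sum_tens; apply: eq_bigr => j _.
  rewrite (@sum_only _ _ l) => [|l2 nl2]; last by rewrite !uE (negbTE nl2) !mulr0.
  by rewrite !uE eqxx !mulr1.
have -> : (dagger v *m ptrace2 X *m v) 0 0 = \sum_l (dagger (u l) *m X *m u l) 0 0.
  under [RHS]eq_bigr do rewrite ql.
  rewrite quadE [RHS]exchange_big /=; apply: eq_bigr => i _.
  rewrite [RHS]exchange_big /=; apply: eq_bigr => j _.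
  by rewrite ptrace2E mulr_sumr mulr_suml; apply: eq_bigr => l _.
by apply: sumr_ge0 => l _; apply: pX.
Qed.

Definition idx3 {a b c : nat} (x : 'I_a) (w : 'I_(b * c)) : 'I_(a * b * c) :=
  cast_ord (mulnA a b c) (mxtens_index (x, w)).

Lemma sum3 (V : nmodType) a b c (F : 'I_(a * b * c) -> V) :
  \sum_(k < a * b * c) F k = \sum_(x < a) \sum_(w < b * c) F (idx3 x w).
Proof.
rewrite (reindex (cast_ord (mulnA a b c))) /=; last first.
  by exists (cast_ord (esym (mulnA a b c))) => k _; rewrite (cast_ordK, cast_ordKV).
by rewrite sum_tens.
Qed.

Lemma idx3E a b c (x : 'I_a) (y : 'I_b) (j : 'I_c) :
  idx3 x (mxtens_index (y, j)) = mxtens_index (mxtens_index (x, y), j).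
Proof. by apply: val_inj => /=; rewrite mulnDl -mulnA addnA. Qed.

Definition blk {a b d : nat} (M : 'M[algC]_(a * b * d)) (x x' : 'I_a) : 'M[algC]_(b * d) :=
  \matrix_(w1, w2) M (idx3 x w1) (idx3 x' w2).

Lemma pp_tr a b d (M : 'M[algC]_(a * b * d)) x x' :
  ptrace2 (ptrace2 M) x x' = \tr (blk M x x').
Proof.
rewrite ptrace2E /mxtrace sum_tens; apply: eq_bigr => y _.
rewrite ptrace2E; apply: eq_bigr => j _; by rewrite mxE !idx3E.
Qed.

Lemma liftE3 a b d d' (K : 'M[algC]_(b * d', b * d)) (x x' : 'I_a) w w' :
  lift_B K (idx3 x w) (idx3 x' w') = (x == x')%:R * K w w'.
Proof. by rewrite /lift_B castmxE /idx3 /= !cast_ordK tensmxE mxE. Qed.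

Lemma blk_sum a b d I (r : seq I) (F : I -> 'M[algC]_(a * b * d)) x x' :
  blk (\sum_(i <- r) F i) x x' = \sum_(i <- r) blk (F i) x x'.
Proof.
apply/matrixP => w1 w2; rewrite !mxE !summxE; apply: eq_bigr => i _; by rewrite mxE.
Qed.

Lemma blk_conj a b d d' (K : 'M[algC]_(b * d', b * d)) (M : 'M[algC]_(a * b * d)) x x' :
  blk (lift_B K *m M *m dagger (lift_B K)) x x' = K *m blk M x x' *m dagger K.
Proof.
apply/matrixP => w1 w2; rewrite !mxE sum3 (@sum_only _ _ x') => [|x2 nx2]; last first.
  by apply: big1 => w _; rewrite daggerE liftE3 eq_sym (negbTE nx2) mul0r conjC0 mulr0.
apply: eq_bigr => w _; rewrite daggerE liftE3 eqxx mul1r !mxE; congr (_ * _).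
rewrite sum3 (@sum_only _ _ x) => [|x1 nx1]; last first.
  by apply: big1 => w' _; rewrite liftE3 eq_sym (negbTE nx1) !mul0r.
by apply: eq_bigr => w' _; rewrite liftE3 eqxx mul1r mxE.
Qed.

Lemma tr_sum n I (r : seq I) (F : I -> 'M[algC]_n) :
  \tr (\sum_(i <- r) F i) = \sum_(i <- r) \tr (F i).
Proof. by apply: (big_morph mxtrace) => [A B|]; rewrite ?mxtraceD ?mxtrace0. Qed.

Lemma key_ptrace a b d d' r (K : 'I_r -> 'M[algC]_(b * d', b * d))
  (M : 'M[algC]_(a * b * d)) : kraus K ->
  ptrace2 (ptrace2 (apply_kraus (fun i => lift_B (a := a) (K i)) M)) = ptrace2 (ptrace2 M).
Proof.
move=> kK; apply/matrixP => x x'; rewrite !pp_tr /apply_kraus blk_sum.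
under eq_bigr do rewrite blk_conj.
rewrite tr_sum; under eq_bigr do rewrite mxtrace_mulC mulmxA.
by rewrite -tr_sum -mulmx_suml kK mul1mx.
Qed.

Definition vecm {m n : nat} (H : 'M[algC]_(m, n)) : 'cV[algC]_(m * n) :=
  \col_k H (mxtens_unindex k).1 (mxtens_unindex k).2.

Lemma vecmE m n (H : 'M[algC]_(m, n)) i j : vecm H (mxtens_index (i, j)) 0 = H i j.
Proof. by rewrite mxE mxtens_indexK. Qed.

Lemma ptrace_vec m n (H : 'M[algC]_(m, n)) :
  ptrace2 (vecm H *m dagger (vecm H)) = H *m dagger H.
Proof.
apply/matrixP => i j; rewrite ptrace2E mxE; apply: eq_bigr => l _.
by rewrite mxE big_ord1 daggerE !vecmE daggerE.
Qed.

Lemma tens_vec m m' n (A : 'M[algC]_(m, m')) (G : 'M[algC]_(m', n)) :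
  (A *t (1%:M : 'M[algC]_n)) *m vecm G = vecm (A *m G).
Proof.
apply/matrixP => k z; rewrite ord1; case: (mxtens_indexP k) => h j.
rewrite vecmE !mxE sum_tens; apply: eq_bigr => h' _.
rewrite (@sum_only _ _ j) => [|j' nj]; last by rewrite tensmxE mxE eq_sym (negbTE nj) mulr0 mul0r.
by rewrite tensmxE vecmE mxE eqxx mulr1.
Qed.

Lemma idx3P a b d (k : 'I_(a * b * d)) : exists x w, k = @idx3 a b d x w.
Proof.
exists (mxtens_unindex (cast_ord (esym (mulnA a b d)) k)).1.
exists (mxtens_unindex (cast_ord (esym (mulnA a b d)) k)).2.
by rewrite /idx3 -surjective_pairing mxtens_unindexK cast_ordKV.
Qed.

Definition resh3 {a b d : nat} (v : 'cV[algC]_(a * b * d)) : 'M[algC]_(a, b * d) :=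
  \matrix_(x, w) v (idx3 x w) 0.

Definition vec3 {a b d : nat} (H : 'M[algC]_(a, b * d)) : 'cV[algC]_(a * b * d) :=
  \col_k H (mxtens_unindex (cast_ord (esym (mulnA a b d)) k)).1
           (mxtens_unindex (cast_ord (esym (mulnA a b d)) k)).2.

Lemma vec3E a b d (H : 'M[algC]_(a, b * d)) x w : vec3 H (idx3 x w) 0 = H x w.
Proof. by rewrite mxE /idx3 cast_ordK mxtens_indexK. Qed.

Lemma vec3K a b d (v : 'cV[algC]_(a * b * d)) : vec3 (resh3 v) = v.
Proof.
apply/matrixP => k z; rewrite ord1; have [x [w ->]] := idx3P k.
by rewrite vec3E mxE.
Qed.

Lemma vec30 a b d : vec3 (0 : 'M[algC]_(a, b * d)) = 0.
Proof. by apply/matrixP => k z; rewrite !mxE. Qed.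

Lemma lift_vec a b d d' (K : 'M[algC]_(b * d', b * d)) (v : 'cV[algC]_(a * b * d)) :
  lift_B (a := a) K *m v = vec3 (resh3 v *m K^T).
Proof.
apply/matrixP => k z; rewrite ord1; have [x [w' ->]] := idx3P k.
rewrite vec3E !mxE sum3 (@sum_only _ _ x) => [|x1 nx1]; last first.
  by apply: big1 => w _; rewrite liftE3 eq_sym (negbTE nx1) !mul0r.
apply: eq_bigr => w _; rewrite liftE3 eqxx mul1r !mxE mulrC.
done.
Qed.

Lemma resh_ptrace a b d (F : 'M[algC]_(a * b, d)) :
  resh3 (vecm F) *m dagger (resh3 (vecm F)) = ptrace2 (F *m dagger F).
Proof.
apply/matrixP => x x'; rewrite ptrace2E mxE sum_tens; apply: eq_bigr => y _.
rewrite mxE; apply: eq_bigr => j _.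
by rewrite daggerE !mxE !idx3E !mxtens_indexK.
Qed.

Lemma tens11 m n : (1%:M : 'M[algC]_m) *t (1%:M : 'M[algC]_n) = 1%:M.
Proof.
apply/matrixP => k l; case: (mxtens_indexP k) => i j; case: (mxtens_indexP l) => i' j'.
rewrite tensmxE !mxE (inj_eq (can_inj (@mxtens_indexK m n))) xpair_eqE.
by case: (i == i'); case: (j == j'); rewrite /= ?mulr1 ?mulr0.
Qed.

Lemma gram_tr0 m n (A : 'M[algC]_(m, n)) : \tr (A *m dagger A) = 0 -> A = 0.
Proof.
move=> h; apply: gram_eq0; apply/matrixP => i j; rewrite [RHS]mxE.
have hge : forall i, 0 <= (A *m dagger A) i i.
  move=> i0; rewrite mxE; apply: sumr_ge0 => k _; rewrite daggerE; exact: mul_conjC_ge0.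
have hz : forall i, (A *m dagger A) i i = 0.
  have h' : \sum_i (A *m dagger A) i i = 0 := h.
  move: h' => /psumr_eq0P H i0; apply: H => // i1 _; exact: hge.
suff -> : A = 0 by rewrite mul0mx mxE.
apply/matrixP => i1 j1; rewrite mxE.
have := hz i1; rewrite mxE => /psumr_eq0P H.
apply/eqP; rewrite -mul_conjC_eq0; apply/eqP; rewrite -daggerE; apply: H => // k _.
rewrite daggerE; exact: mul_conjC_ge0.
Qed.

Lemma daggerT_mul m n (Y : 'M[algC]_(m, n)) : dagger (Y^T) *m Y^T = (Y *m dagger Y)^T.
Proof. by rewrite trmx_mul dagger_tr /dagger trmxK. Qed.

Lemma trmxD' m n (A B : 'M[algC]_(m, n)) : (A + B)^T = A^T + B^T.
Proof. by apply/matrixP => i j; rewrite !mxE. Qed.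

Lemma trB n (A B : 'M[algC]_n) : \tr (A - B) = \tr A - \tr B.
Proof.
rewrite mxtraceD; congr (_ + _); rewrite /mxtrace -sumrN.
by apply: eq_bigr => i _; rewrite mxE.
Qed.

Theorem mainTheorem11 (a b k : nat) (E : 'M[algC]_(a * b, k)) :
  is_isometry E ->
  forall rho : 'M[algC]_(a * b), experiment_outcome E rho <-> ST_B E rho.
Proof.
move=> isoE rho; split.
- case=> d [sigma [[psig trsig] [d' [r [K [kK Hrho]]]]]].
  move: Hrho => /= Hrho.
  set V := E *t (1%:M : 'M[algC]_d) in Hrho.
  set enc := V *m sigma *m dagger V in Hrho.
  have penc : psd enc by apply: psd_conj.
  set out := apply_kraus _ enc in Hrho.
  have pout : psd out.
    by rewrite /out /apply_kraus; apply: psd_sum => i; apply: psd_conj.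
  pose rho' : 'M[algC]_(a * b) := ptrace2 enc.
  have VV : dagger V *m V = 1%:M.
    by rewrite /V dagger_tens tensmx_mul isoE dagger1 mulmx1 tens11.
  have trenc : \tr enc = 1.
    by rewrite /enc mxtrace_mulC mulmxA VV mul1mx.
  have trrho' : \tr rho' = 1 by rewrite /rho' tr_ptrace.
  have eB : ptrace2 rho = ptrace2 rho' by rewrite Hrho key_ptrace.
  split.
    split; first by rewrite Hrho; apply: psd_ptrace.
    by rewrite -tr_ptrace eB tr_ptrace.
  exists rho'; split => //; split.
    by split => //; apply: psd_ptrace.
  rewrite /rho' tr_mul_ptrace /enc mulmxA mxtrace_mulC !mulmxA.
  have -> : dagger V *m (code_proj E *t 1%:M) *m V = 1%:M.
    by rewrite /V /code_proj dagger_tens !tensmx_mul dagger1 !mulmx1 !mulmxA isoE mul1mx isoE tens11.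
  by rewrite mul1mx.
- case=> [[prho trrho] [rho' [[[prho' trrho'] trP] eB]]].
  have [F eF] := psd_factor prho.
  have [G eG] := psd_factor prho'.
  set P := code_proj E in trP.
  have PG : P *m G = G.
    have Ph : dagger P = P by rewrite /P /code_proj dagger_mul daggerK.
    have PP : P *m P = P by rewrite /P /code_proj mulmxA -(mulmxA E) isoE mulmx1.
    suff : (1%:M - P) *m G = 0 by rewrite mulmxBl mul1mx => /eqP; rewrite subr_eq0 => /eqP.
    apply: gram_tr0; rewrite dagger_mul mxtrace_mulC mulmxA daggerB dagger1 Ph.
    have RR : (1%:M - P) *m (1%:M - P) = 1%:M - P.
      by rewrite mulmxBl mul1mx (mulmxBr P) mulmx1 PP subrr subr0.
    rewrite -(mulmxA (dagger G)) RR.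
    by rewrite mxtrace_mulC mulmxA -eG mulmxBr mulmx1 trB (mxtrace_mulC rho') trP trrho' subrr.
  pose Ft : 'M[algC]_(a, b * (a * b)) := resh3 (vecm F).
  pose Gt : 'M[algC]_(a, b * (a * b)) := resh3 (vecm G).
  have eFG : Ft *m dagger Ft = Gt *m dagger Gt.
    by rewrite /Ft /Gt !resh_ptrace -eF -eG.
  have [Y0 [Y1 [hY0 hY1 hY]]] := uhlmann eFG.
  pose t := vecm (dagger E *m G).
  pose sigma := t *m dagger t.
  exists (a * b)%N, sigma; split.
    split; first exact: psd_gram.
    rewrite -tr_ptrace /sigma /t ptrace_vec dagger_mul daggerK mxtrace_mulC !mulmxA.
    by rewrite mxtrace_mulC !mulmxA -eG -mulmxA mxtrace_mulC.
  pose K := fun i : 'I_2 => if val i == 0%N then Y0^T else Y1^T.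
  exists (a * b)%N, 2%N, K; split.
    rewrite /kraus !big_ord_recl big_ord0 /K /= !daggerT_mul addr0 -trmxD' hY.
    exact: trmx1.
  rewrite /=.
  have enc : (E *t 1%:M) *m sigma *m dagger (E *t 1%:M) = vecm G *m dagger (vecm G).
    have Et : (E *t 1%:M) *m t = vecm G.
      by rewrite /t tens_vec mulmxA PG.
    transitivity (((E *t (1%:M : 'M_(a * b))) *m t) *m dagger ((E *t (1%:M : 'M_(a * b))) *m t)).
      by rewrite dagger_mul !mulmxA.
    by rewrite Et.
  rewrite enc /apply_kraus.
  have hL : forall Y : 'M[algC]_(b * (a * b)),
      lift_B (a := a) Y *m (vecm G *m dagger (vecm G)) *m dagger (lift_B (a := a) Y)
      = (lift_B (a := a) Y *m vecm G) *m dagger (lift_B (a := a) Y *m vecm G).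
    by move=> Y; rewrite dagger_mul !mulmxA.
  rewrite !big_ord_recl big_ord0 /K /= !hL !lift_vec !trmxK -/Gt hY0 hY1 vec30 vec3K.
  by rewrite mul0mx !addr0 ptrace_vec eF.
Qed.
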